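(* Let $(W_i,\partial_i)_i$, $(\widehat W_i,\widehat\partial_i)_i$ and $(V_i,d_i)_i$ be complexes of real vector spaces, and for each $i$ let $E_{W_i}:\widehat W_i\to W_i$, $\widehat R_{W_i}:W_i\to\widehat W_i$, $\mathcal{E}_i:W_i\to V_i$, $\mathcal{R}_i:V_i\to W_i$ be linear maps satisfying: (A1) $\widehat R_{W_i}E_{W_i}$ restricted to $\ker\widehat\partial_i$ is the identity of $\ker\widehat\partial_i$; (A2) $(E_{W_{i+1}}\widehat R_{W_{i+1}}-\mathrm{Id}_{W_{i+1}})(\ker\partial_{i+1})\subset\operatorname{Im}\partial_i$; (A3) $\widehat R_{W_{i+1}}\partial_i=\widehat\partial_i\widehat R_{W_i}$ and $E_{W_{i+1}}\widehat\partial_i=\partial_iE_{W_i}$; (B1) $\mathcal{R}_i\mathcal{E}_i=\mathrm{Id}_{W_i}$; (B2) $(\mathcal{E}_{i+1}\mathcal{R}_{i+1}-\mathrm{Id}_{V_{i+1}})(\ker d_{i+1})\subset\operatorname{Im}d_i$; (B3) $\mathcal{R}_{i+1}d_i=\partial_i\mathcal{R}_i$ and $\mathcal{E}_{i+1}\partial_i=d_i\mathcal{E}_i$. Let $\widehat V_i$, $\widehat d_i$, $E_{V_i}$, $\widehat R_{V_i}$ be as defined in the context. Then, for all $i$: (i) $\widehat R_{V_i}E_{V_i}$ restricted to $\ker\widehat d_i$ is the identity of $\ker\widehat d_i$; (ii) $(E_{V_{i+1}}\widehat R_{V_{i+1}}-\mathrm{Id}_{V_{i+1}})(\ker d_{i+1})\subset\operatorname{Im}d_i$;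 (iii) $\widehat R_{V_{i+1}}d_i=\widehat d_i\widehat R_{V_i}$ and $E_{V_{i+1}}\widehat d_i=d_iE_{V_i}$.
   Context: A complex $(W_i,\partial_i)_i$ is a sequence of vector spaces indexed by integers with linear maps $\partial_i:W_i\to W_{i+1}$, $\partial_{i+1}\partial_i=0$. Set $C_i\coloneq\ker\mathcal{R}_i\subset V_i$. Under (B1), every $v\in V_i$ can be written uniquely as $v=\mathcal{E}_iv_w+v_c$ with $v_w\in W_i$, $v_c\in C_i$; define $\Pi_{C_i}v\coloneq v_c$. Define $\widehat V_i\coloneq\widehat W_i\times C_i$, with elements $\widehat v=(\widehat v_w,\widehat v_c)$, and $\widehat d_i:\widehat V_i\to\widehat V_{i+1}$ by $\widehat d_i(\widehat v_w,\widehat v_c)\coloneq(\widehat\partial_i\widehat v_w,d_i\widehat v_c)$ (well defined since $d_iC_i\subset C_{i+1}$ under (B3)). Define $E_{V_i}:\widehat V_i\to V_i$ by $E_{V_i}(\widehat v_w,\widehat v_c)\coloneq\mathcal{E}_iE_{W_i}\widehat v_w+\widehat v_c$ and $\widehat R_{V_i}:V_i\to\widehat V_i$ by $\widehat R_{V_i}v\coloneq(\widehat R_{W_i}\mathcal{R}_iv,\Pi_{C_i}v)$. *)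

(* Defs.v *)
From HB Require Import structures.
From mathcomp Require Import all_boot all_order all_algebra.
From mathcomp Require Import reals.
Set Implicit Arguments. Unset Strict Implicit. Unset Printing Implicit Defensive.
Import Order.TTheory GRing.Theory Num.Theory.
Local Open Scope ring_scope.

Definition is_complex (R : realType) (X : int -> lmodType R)
  (dX : forall i : int, {linear X i -> X (i + 1)}) : Prop :=
  forall (i : int) (x : X i), dX (i + 1) (dX i x) = 0.

Section Construction.
Variables (R : realType) (W Wh V : int -> lmodType R).
Variables (dW : forall i : int, {linear W i -> W (i + 1)})
          (dWh : forall i : int, {linear Wh i -> Wh (i + 1)})
          (dV : forall i : int, {linear V i -> V (i + 1)}).
Variables (EW : forall i : int, {linear Wh i -> W i})
          (RW : forall i : int, {linear W i -> Wh i})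
          (Ecal : forall i : int, {linear W i -> V i})
          (Rcal : forall i : int, {linear V i -> W i}).

Definition inC (i : int) (c : V i) : Prop := Rcal i c = 0.

(* Under (B1), v = Ecal (Rcal v) + (v - Ecal (Rcal v)) is the unique
   decomposition v = Ecal v_w + v_c with v_c in C_i, so Pi_C v = v_c is: *)
Definition PiC (i : int) (v : V i) : V i := v - Ecal i (Rcal i v).

(* hat V_i = hat W_i x C_i, represented as pairs (w, c) in hat W_i x V_i
   with c in C_i (the side condition inC is imposed in the statement). *)
Definition hatV (i : int) : Type := (Wh i * V i)%type.

Definition dhat (i : int) (p : hatV i) : hatV (i + 1) :=
  (dWh i p.1, dV i p.2).

Definition EV (i : int) (p : hatV i) : V i := Ecal i (EW i p.1) + p.2.

Definition RVhat (i : int) (v : V i) : hatV i := (RW i (Rcal i v), PiC v).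

End Construction.

(* Main.v *)
Require Import Defs.
From HB Require Import structures.
From mathcomp Require Import all_boot all_order all_algebra.
From mathcomp Require Import reals.
Import Order.TTheory GRing.Theory Num.Theory.
Local Open Scope ring_scope.

Theorem theorem7 (R : realType) (W Wh V : int -> lmodType R)
  (dW : forall i : int, {linear W i -> W (i + 1)})
  (dWh : forall i : int, {linear Wh i -> Wh (i + 1)})
  (dV : forall i : int, {linear V i -> V (i + 1)})
  (EW : forall i : int, {linear Wh i -> W i})
  (RW : forall i : int, {linear W i -> Wh i})
  (Ecal : forall i : int, {linear W i -> V i})
  (Rcal : forall i : int, {linear V i -> W i})
  (cW : is_complex dW) (cWh : is_complex dWh) (cV : is_complex dV)
  (A1 : forall (i : int) (w : Wh i), dWh i w = 0 -> RW i (EW i w) = w)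
  (A2 : forall (i : int) (x : W (i + 1)), dW (i + 1) x = 0 ->
          exists y : W i, EW (i + 1) (RW (i + 1) x) - x = dW i y)
  (A3 : forall i : int,
          (forall x : W i, RW (i + 1) (dW i x) = dWh i (RW i x)) /\
          (forall w : Wh i, EW (i + 1) (dWh i w) = dW i (EW i w)))
  (B1 : forall (i : int) (x : W i), Rcal i (Ecal i x) = x)
  (B2 : forall (i : int) (v : V (i + 1)), dV (i + 1) v = 0 ->
          exists u : V i, Ecal (i + 1) (Rcal (i + 1) v) - v = dV i u)
  (B3 : forall i : int,
          (forall v : V i, Rcal (i + 1) (dV i v) = dW i (Rcal i v)) /\
          (forall x : W i, Ecal (i + 1) (dW i x) = dV i (Ecal i x))) :
  forall i : int,
    (* (i) *)
    (forall (p : hatV Wh V i), inC Rcal p.2 -> dhat dWh dV p = 0 ->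
        RVhat RW Ecal Rcal (EV EW Ecal p) = p) /\
    (* (ii) *)
    (forall v : V (i + 1), dV (i + 1) v = 0 ->
        exists u : V i, EV EW Ecal (RVhat RW Ecal Rcal v) - v = dV i u) /\
    (* (iii) *)
    ((forall v : V i, RVhat RW Ecal Rcal (dV i v) = dhat dWh dV (RVhat RW Ecal Rcal v)) /\
     (forall p : hatV Wh V i, inC Rcal p.2 ->
        EV EW Ecal (dhat dWh dV p) = dV i (EV EW Ecal p))).
Proof.
move=> i; split; [|split; [|split]].
- case=> w c /= Hc Hd.
  have [Hw _] : dWh i w = 0 /\ dV i c = 0.
    by move: Hd; rewrite /dhat /= => -[-> ->].
  rewrite /RVhat /EV /PiC /= linearD /= B1 Hc addr0 A1 //.
  by congr pair; rewrite addrC addKr.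
- move=> v Hv.
  have Hx : dW (i + 1) (Rcal (i + 1) v) = 0.
    by rewrite -(proj1 (B3 (i + 1))) Hv linear0.
  have [y Hy] := A2 _ _ Hx.
  exists (Ecal i y).
  rewrite /EV /RVhat /PiC /= -(proj2 (B3 i)) -Hy linearB /=.
  by rewrite addrA addrAC addrK.
- move=> v; rewrite /RVhat /dhat /PiC /=.
  by rewrite (proj1 (B3 i)) (proj1 (A3 i)) (proj2 (B3 i)) linearB.
- case=> w c /= Hc; rewrite /EV /dhat /=.
  by rewrite (proj2 (A3 i)) (proj2 (B3 i)) linearD.
Qed.
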